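(* Let $n\ge 1$ and $0\le k\le n-1$ be integers. The complement $\overline{S^k_{n-k}}$ of the generalized crown graph $S^k_{n-k}$ is word-representable. Explicitly: the graph with vertex set $\{1,\dots,n\}\cup\{1',\dots,n'\}$ in which $\{1,\dots,n\}$ and $\{1',\dots,n'\}$ are cliques and, for $i,j\in\{1,\dots,n\}$, $i$ is adjacent to $j'$ if and only if $j\equiv i+r \pmod n$ for some $r\in\{0,1,\dots,k\}$ (residues taken in $\{1,\dots,n\}$), is word-representable.
   Context: A graph $G=(V,E)$ is word-representable if there exists a word $w$ over the alphabet $V$, containing every letter of $V$ at least once, such that for all distinct $x,y\in V$, the letters $x$ and $y$ alternate in $w$ (i.e., the subword of $w$ obtained by deleting all letters other than $x,y$ has no two equal consecutive letters) if and only if $xy\in E$. The generalized crown graph $S^k_{n-k}$ is the bipartite graph with parts $X=\{1,\dots,n\}$ and $Y=\{1',\dots,n'\}$ obtained from the complete bipartite graph $K_{n,n}$ by deleting, for each $i\in\{1,\dots,n\}$, the edges from $i$ to $j'$ for all $j\equiv i,i+1,\dots,i+k \pmod n$ (with residues in $\{1,\dots,n\}$, i.e. $0'$ means $n'$). For $k=0$ this is the crown graph $H_{n,n}$. *)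

(* Defs.v *)
From mathcomp Require Import all_boot.
Set Implicit Arguments. Unset Strict Implicit. Unset Printing Implicit Defensive.

Definition alternate (V : eqType) (w : seq V) (x y : V) : bool :=
  let s := [seq z <- w | (z == x) || (z == y)] in
  sorted (fun a b => a != b) s.

Definition word_representable (V : finType) (E : rel V) : Prop :=
  exists w : seq V,
    (forall v : V, v \in w) /\
    (forall x y : V, x != y -> (alternate w x y <-> E x y)).

(* Vertices: inl i is the
   vertex i+1 of X, inr j is the vertex (j+1)' of Y (0-indexed residues). *)
Definition coCrownAdj (n k : nat) (u v : 'I_n + 'I_n) : bool :=
  match u, v with
  | inl i, inl j => i != j
  | inr i, inr j => i != j
  | inl i, inr j => [exists r : 'I_k.+1, (j : nat) == (i + r) %% n]
  | inr j, inl i => [exists r : 'I_k.+1, (j : nat) == (i + r) %% n]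
  end.
Arguments coCrownAdj n k u v : clear implicits.

(* Main.v *)
Require Import Defs.
From mathcomp Require Import all_boot.
From mathcomp Require Import zify.
Set Implicit Arguments. Unset Strict Implicit. Unset Printing Implicit Defensive.

Lemma filter_head (V : eqType) (P : pred V) (F : nat -> V) m N :
  (filter P (map F (iota m N)) = [::] /\ forall p, m <= p < m + N -> ~~ P (F p)) \/
  exists p0 rest, [/\ m <= p0 < m + N, P (F p0), (forall p, m <= p < p0 -> ~~ P (F p)) &
       filter P (map F (iota m N)) = F p0 :: rest].
Proof.
elim: N m => [|N IH] m.
  left; split => // p Hp; exfalso; lia.
rewrite /=; case: ifP => Pm.
  right; exists m, [seq x <- map F (iota m.+1 N) | P x]; split => //; first lia.
  move=> p Hp; exfalso; lia.
case: (IH m.+1) => [[-> H]|[p0 [rest [H1 H2 H3 H4]]]].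
  left; split => // p Hp; case: (ltnP m p) => Hmp; first (apply: H; lia).
  have -> : p = m by lia.
  by rewrite Pm.
right; exists p0, rest; split => //; first lia.
move=> p Hp; case: (ltnP m p) => Hmp; first (apply: H3; lia).
have -> : p = m by lia.
by rewrite Pm.
Qed.

Lemma alt_iff (V : eqType) (F : nat -> V) (a b : V) m N :
  sorted (fun x y => x != y) [seq z <- map F (iota m N) | (z == a) || (z == b)] <->
  (forall p1 p2, m <= p1 -> p1 < p2 -> p2 < m + N -> F p1 = F p2 -> (F p1 == a) || (F p1 == b) ->
     exists r, [/\ p1 < r, r < p2, (F r == a) || (F r == b) & F r != F p1]).
Proof.
elim: N m => [|N IH] m.
  split => // _ p1 p2 *; exfalso; lia.
have IHm := IH m.+1.
rewrite /=; case: ifP => Pm.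
  case: (filter_head (fun z => (z == a) || (z == b)) F m.+1 N) =>
     [[HT Hn]|[p0 [rest [Hp0 HP0 Hbef HT]]]].
    rewrite HT /=; split => // _ p1 p2 H1 H12 H2 Heq HP; exfalso.
    have := Hn p2; rewrite -Heq HP; move=> /(_ _)/negP; apply; lia.
  rewrite HT /=; rewrite HT in IHm; split.
    move=> /andP[Hne Hs] p1 p2 H1 H12 H2 Heq HP.
    case: (ltnP m p1) => Hmp.
      by apply: (proj1 IHm Hs) => //; lia.
    have Ep1 : p1 = m by lia.
    subst p1.
    exists p0; split => //; last by rewrite eq_sym.
      lia.
    case: (ltnP p0 p2) => // Hle.
    case: (ltngtP p0 p2) => Hc.
    - lia.
    - have := Hbef p2; rewrite -Heq Pm => /(_ _)/negP; case; lia.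
    - by move: Hne; rewrite Hc Heq eqxx.
  move=> Hc; apply/andP; split.
    apply/negP => /eqP Heq.
    have [r [Hr1 Hr2 Hr3 Hr4]] := Hc m p0 (leqnn m) (ltac:(lia)) (ltac:(lia)) Heq Pm.
    by have := Hbef r; rewrite Hr3 => /(_ _)/negP; apply; lia.
  apply/(proj2 IHm) => p1 p2 H1 H12 H2 Heq HP.
  apply: Hc => //; lia.
rewrite IHm; split.
  move=> Hc p1 p2 H1 H12 H2 Heq HP.
  case: (ltnP m p1) => Hmp; first by apply: Hc => //; lia.
  have Ep1 : p1 = m by lia.
  by subst p1; rewrite Pm in HP.
move=> Hc p1 p2 H1 H12 H2 Heq HP; apply: Hc => //; lia.
Qed.

Definition ox (D t : nat) := if t <= D then t else t.*2 - D.
Definition oy (n D s : nat) := if s < n - D then D + s.*2 + 1 else n + s + 1.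
Definition off n D (b : bool) t := if b then ox D t else oy n D t.
Definition dec n D o : bool * nat :=
  if o <= D then (true, o)
  else if o <= n.*2 - D then
    (if odd (o - D) then (false, (o - D)./2) else (true, (o + D)./2))
  else (false, o - n.+1).

Definition within D (b1 : bool) t1 (b2 : bool) t2 : Prop :=
  match b1, b2 with
  | true, true => t1 < t2
  | false, false => t1 < t2
  | true, false => t1 <= t2 + D
  | false, true => t1 + D < t2
  end.

Lemma dec_off n D b t : D < n -> t <= n -> dec n D (off n D b t) = (b, t).
Proof.
move=> hD ht; case: b; rewrite /off /ox /oy /dec.
  case: (leqP t D) => h1; first by rewrite h1.
  repeat (case: ifP => ?); try lia; congr pair; lia.
case: (ltnP t (n - D)) => h1; repeat (case: ifP => ?); try lia; congr pair; lia.
Qed.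

Lemma off_dec n D o : D < n -> o < n.*2.+2 ->
  (dec n D o).2 <= n /\ off n D (dec n D o).1 (dec n D o).2 = o.
Proof.
move=> hD ho; rewrite /dec /off /ox /oy.
repeat (case: ifP => ? /=); split; try lia.
Qed.

Lemma off_lt n D b t : D < n -> t <= n -> off n D b t < n.*2.+2.
Proof. move=> hD ht; case: b; rewrite /off /ox /oy; case: ifP => ?; lia. Qed.

Lemma off_ltP n D b1 t1 b2 t2 : D < n -> t1 <= n -> t2 <= n ->
  (off n D b1 t1 < off n D b2 t2) <-> within D b1 t1 b2 t2.
Proof.
move=> hD h1 h2; case: b1; case: b2; rewrite /off /ox /oy /within;
  repeat (case: ifP => ?); split; lia.
Qed.

Definition ix n (hn : 0 < n) m : 'I_n := Ordinal (ltn_pmod m hn).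
Definition lab n (hn : 0 < n) q (b : bool) t : 'I_n + 'I_n :=
  if b then inl (ix hn (q + t)) else inr (ix hn (q + t)).
Definition Fw n D (hn : 0 < n) p :=
  lab hn (p %/ n.*2.+2) (dec n D (p %% n.*2.+2)).1 (dec n D (p %% n.*2.+2)).2.
Definition pos n D q b t := q * n.*2.+2 + off n D b t.
Arguments Fw n D hn p : clear implicits.

Lemma Fw_pos n D (hn : 0 < n) q b t : D < n -> t <= n ->
  Fw n D hn (pos n D q b t) = lab hn q b t.
Proof.
move=> hD ht; rewrite /Fw /pos divnMDl // modnMDl divn_small ?off_lt // modn_small ?off_lt //.
by rewrite addn0 dec_off.
Qed.

Lemma pos_dec n D p : D < n -> p < n * n.*2.+2 ->
  exists q b t, [/\ q < n, t <= n & p = pos n D q b t].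
Proof.
move=> hD hp.
have ho : p %% n.*2.+2 < n.*2.+2 by rewrite ltn_mod.
have [h1 h2] := off_dec hD ho.
exists (p %/ n.*2.+2), (dec n D (p %% n.*2.+2)).1, (dec n D (p %% n.*2.+2)).2; split => //.
  by rewrite ltn_divLR.
by rewrite /pos h2 -divn_eq.
Qed.

Lemma lex_lt q1 q2 o1 o2 M : o1 < M -> o2 < M ->
  (q1 * M + o1 < q2 * M + o2) <-> (q1 < q2 \/ q1 = q2 /\ o1 < o2).
Proof. move=> *; split; nia. Qed.

Lemma pos_lt n D q b t : D < n -> q < n -> t <= n -> pos n D q b t < n * n.*2.+2.
Proof. move=> hD hq ht; have := off_lt b hD ht; rewrite /pos; nia. Qed.

Lemma pos_ltP n D q1 b1 t1 q2 b2 t2 : D < n -> t1 <= n -> t2 <= n ->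
  (pos n D q1 b1 t1 < pos n D q2 b2 t2) <-> (q1 < q2 \/ q1 = q2 /\ within D b1 t1 b2 t2).
Proof.
move=> hD h1 h2; rewrite /pos lex_lt ?off_lt // off_ltP //.
Qed.

Lemma modn_iff n m a : m < n.*2 -> a < n -> ((m %% n = a) <-> (m = a \/ m = a + n)).
Proof.
move=> hm ha; case: (ltnP m n) => h.
  rewrite modn_small //; lia.
have -> : m = (m - n) + n by lia.
rewrite modnDr modn_small; lia.
Qed.

Lemma lab_inl n (hn : 0 < n) q b t (a : 'I_n) : q < n -> t <= n ->
  (lab hn q b t = inl a <-> b = true /\ (q + t = a \/ q + t = a + n)).
Proof.
move=> hq ht; rewrite -(@modn_iff n (q + t) a) ?ltn_ord //; last lia.
rewrite /lab; case: b; split => //=.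
- by case=> <-.
- by case=> _ H; congr inl; apply: val_inj.
- by case.
Qed.

Lemma lab_inr n (hn : 0 < n) q b t (a : 'I_n) : q < n -> t <= n ->
  (lab hn q b t = inr a <-> b = false /\ (q + t = a \/ q + t = a + n)).
Proof.
move=> hq ht; rewrite -(@modn_iff n (q + t) a) ?ltn_ord //; last lia.
rewrite /lab; case: b; split => //=.
- by case.
- by case=> <-.
- by case=> _ H; congr inr; apply: val_inj.
Qed.

Lemma ev_betw n D (hn : 0 < n) (hD : D < n) (c d : 'I_n + 'I_n) :
 (forall q1 b1 t1 q2 b2 t2, q1 < n -> t1 <= n -> q2 < n -> t2 <= n ->
   lab hn q1 b1 t1 = c -> lab hn q2 b2 t2 = c ->
   (q1 < q2 \/ q1 = q2 /\ within D b1 t1 b2 t2) ->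
   exists q b t, [/\ q < n, t <= n, lab hn q b t = d,
     (q1 < q \/ q1 = q /\ within D b1 t1 b t) & (q < q2 \/ q = q2 /\ within D b t b2 t2)]) ->
 forall p1 p2, p1 < p2 -> p2 < n * n.*2.+2 -> Fw n D hn p1 = c -> Fw n D hn p2 = c ->
   exists r, p1 < r < p2 /\ Fw n D hn r = d.
Proof.
move=> H p1 p2 H12 H2 F1 F2.
have [q1 [b1 [t1 [hq1 ht1 E1]]]] := pos_dec hD (ltn_trans H12 H2).
have [q2 [b2 [t2 [hq2 ht2 E2]]]] := pos_dec hD H2.
subst p1 p2.
rewrite Fw_pos // in F1; rewrite Fw_pos // in F2.
have [q [b [t [hq ht Ld O1 O2]]]] := H _ _ _ _ _ _ hq1 ht1 hq2 ht2 F1 F2 (proj1 (pos_ltP _ _ _ _ hD ht1 ht2) H12).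
exists (pos n D q b t); split; last by rewrite Fw_pos.
by apply/andP; split; apply/pos_ltP.
Qed.

Lemma core_same n (a b q1 t1 q2 t2 : nat) : a < n -> b < n -> a <> b -> q1 < n -> q2 < n ->
  t1 <= n -> t2 <= n -> (q1 + t1 = a \/ q1 + t1 = a + n) -> (q2 + t2 = a \/ q2 + t2 = a + n) ->
  (q1 < q2 \/ q1 = q2 /\ t1 < t2) ->
  exists q t, [/\ q < n, t <= n, (q + t = b \/ q + t = b + n),
     (q1 < q \/ q1 = q /\ t1 < t) & (q < q2 \/ q = q2 /\ t < t2)].
Proof.
move=> *.
have [ts [h1 h2]] : exists ts, (q1 + ts = b \/ q1 + ts = b + n) /\ ts < n.
  by case: (leqP q1 b) => h; [exists (b - q1) | exists (b + n - q1)]; lia.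
case: (ltnP t1 ts) => h.
  by exists q1, ts; split; lia.
case: (posnP ts) => h0.
  by exists q1, n; split; lia.
by exists q1.+1, ts.-1; split; lia.
Qed.

Lemma core_XY n k r (i j q1 t1 q2 t2 : nat) : 0 < n -> k <= n - 1 -> r <= k ->
  i < n -> j < n -> (i + r = j \/ i + r = j + n) -> q1 < n -> q2 < n ->
  t1 <= n -> t2 <= n -> (q1 + t1 = i \/ q1 + t1 = i + n) -> (q2 + t2 = i \/ q2 + t2 = i + n) ->
  (q1 < q2 \/ q1 = q2 /\ t1 < t2) ->
  exists q s, [/\ q < n, s <= n, (q + s = j \/ q + s = j + n),
     (q1 < q \/ q1 = q /\ t1 <= s + (n - k.+1)) & (q < q2 \/ q = q2 /\ s + (n - k.+1) < t2)].
Proof.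
move=> *.
case: (leqP (t1 + r) n) => h.
  by exists q1, (t1 + r); split; lia.
by exists q1.+1, (t1 + r - n.+1); split; lia.
Qed.

Lemma core_YX n k r (i j q1 t1 q2 t2 : nat) : 0 < n -> k <= n - 1 -> r <= k ->
  i < n -> j < n -> (i + r = j \/ i + r = j + n) -> q1 < n -> q2 < n ->
  t1 <= n -> t2 <= n -> (q1 + t1 = j \/ q1 + t1 = j + n) -> (q2 + t2 = j \/ q2 + t2 = j + n) ->
  (q1 < q2 \/ q1 = q2 /\ t1 < t2) ->
  exists q s, [/\ q < n, s <= n, (q + s = i \/ q + s = i + n),
     (q1 < q \/ q1 = q /\ t1 + (n - k.+1) < s) & (q < q2 \/ q = q2 /\ s <= t2 + (n - k.+1))].
Proof.
move=> *.
case: (leqP t1 r) => h.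
  by exists q1, (t1 + n - r); split; lia.
by exists q1.+1, (t1 - r - 1); split; lia.
Qed.

Definition W n D (hn : 0 < n) := map (Fw n D hn) (iota 0 (n * n.*2.+2)).
Arguments W n D hn : clear implicits.

Lemma alt_sym (V : eqType) (w : seq V) x y : alternate w x y = alternate w y x.
Proof. by rewrite /alternate; congr sorted; apply: eq_filter => z; rewrite orbC. Qed.

Lemma alt_of_betw (V : eqType) (F : nat -> V) N c d : c != d ->
  (forall p1 p2, p1 < p2 -> p2 < N -> F p1 = c -> F p2 = c -> exists r, p1 < r < p2 /\ F r = d) ->
  (forall p1 p2, p1 < p2 -> p2 < N -> F p1 = d -> F p2 = d -> exists r, p1 < r < p2 /\ F r = c) ->
  alternate (map F (iota 0 N)) c d.
Proof.
move=> hcd H1 H2; rewrite /alternate; apply/alt_iff => p1 p2 _ h12 h2 Heq /orP[/eqP Hc|/eqP Hd].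
  have [r [/andP[r1 r2] Fr]] := H1 p1 p2 h12 h2 Hc (etrans (esym Heq) Hc).
  by exists r; split => //; rewrite Fr ?eqxx ?orbT // Hc eq_sym.
have [r [/andP[r1 r2] Fr]] := H2 p1 p2 h12 h2 Hd (etrans (esym Heq) Hd).
by exists r; split => //; rewrite Fr ?eqxx // Hd.
Qed.

Lemma betw_of_alt (V : eqType) (F : nat -> V) N c d : c != d ->
  alternate (map F (iota 0 N)) c d ->
  forall p1 p2, p1 < p2 -> p2 < N -> F p1 = c -> F p2 = c -> exists r, p1 < r < p2 /\ F r = d.
Proof.
move=> hcd /alt_iff H p1 p2 h12 h2 F1 F2.
have [r [r1 r2 r3 r4]] := H p1 p2 (leq0n _) h12 h2 (etrans F1 (esym F2)) (ltac:(by rewrite F1 eqxx)).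
exists r; split; first by rewrite r1 r2.
by move: r3 r4; rewrite F1 => /orP[/eqP ->|/eqP //]; rewrite eqxx.
Qed.

Definition evh n D (hn : 0 < n) c d : Prop :=
 forall q1 b1 t1 q2 b2 t2, q1 < n -> t1 <= n -> q2 < n -> t2 <= n ->
   lab hn q1 b1 t1 = c -> lab hn q2 b2 t2 = c ->
   (q1 < q2 \/ q1 = q2 /\ within D b1 t1 b2 t2) ->
   exists q b t, [/\ q < n, t <= n, lab hn q b t = d,
     (q1 < q \/ q1 = q /\ within D b1 t1 b t) & (q < q2 \/ q = q2 /\ within D b t b2 t2)].
Arguments evh n D hn c d : clear implicits.

Lemma alt_ev n D (hn : 0 < n) (hD : D < n) c d : c != d ->
  evh n D hn c d -> evh n D hn d c -> alternate (W n D hn) c d.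
Proof.
move=> hcd H1 H2; apply: alt_of_betw => // p1 p2 h12 h2 F1 F2.
  exact: (@ev_betw n D hn hD c d H1 p1 p2).
exact: (@ev_betw n D hn hD d c H2 p1 p2).
Qed.

Lemma ord_neq n (a b : 'I_n) : a != b -> (a : nat) <> b.
Proof. by move=> /eqP hab E; apply: hab; apply: val_inj. Qed.

Lemma evh_X n D (hn : 0 < n) (a b : 'I_n) : a != b -> evh n D hn (inl a) (inl b).
Proof.
move=> hab q1 b1 t1 q2 b2 t2 hq1 ht1 hq2 ht2 F1 F2 ho.
have [Eb1 h1] := proj1 (@lab_inl n hn q1 b1 t1 a hq1 ht1) F1.
have [Eb2 h2] := proj1 (@lab_inl n hn q2 b2 t2 a hq2 ht2) F2.
subst b1 b2; simpl in ho.
have [q [t [hq ht hl o1 o2]]] :=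
  @core_same n a b q1 t1 q2 t2 (ltn_ord a) (ltn_ord b) (ord_neq hab) hq1 hq2 ht1 ht2 h1 h2 ho.
exists q, true, t; split => //.
by apply/(@lab_inl n hn q true t b hq ht).
Qed.

Lemma evh_Y n D (hn : 0 < n) (a b : 'I_n) : a != b -> evh n D hn (inr a) (inr b).
Proof.
move=> hab q1 b1 t1 q2 b2 t2 hq1 ht1 hq2 ht2 F1 F2 ho.
have [Eb1 h1] := proj1 (@lab_inr n hn q1 b1 t1 a hq1 ht1) F1.
have [Eb2 h2] := proj1 (@lab_inr n hn q2 b2 t2 a hq2 ht2) F2.
subst b1 b2; simpl in ho.
have [q [t [hq ht hl o1 o2]]] :=
  @core_same n a b q1 t1 q2 t2 (ltn_ord a) (ltn_ord b) (ord_neq hab) hq1 hq2 ht1 ht2 h1 h2 ho.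
exists q, false, t; split => //.
by apply/(@lab_inr n hn q false t b hq ht).
Qed.

Lemma evh_XY n k (hn : 0 < n) (hk : k <= n - 1) r (i j : 'I_n) : r <= k ->
  (i + r = j \/ i + r = j + n) -> evh n (n - k.+1) hn (inl i) (inr j).
Proof.
move=> hr hij q1 b1 t1 q2 b2 t2 hq1 ht1 hq2 ht2 F1 F2 ho.
have [Eb1 h1] := proj1 (@lab_inl n hn q1 b1 t1 i hq1 ht1) F1.
have [Eb2 h2] := proj1 (@lab_inl n hn q2 b2 t2 i hq2 ht2) F2.
subst b1 b2; simpl in ho.
have [q [t [hq ht hl o1 o2]]] :=
  @core_XY n k r i j q1 t1 q2 t2 hn hk hr (ltn_ord i) (ltn_ord j) hij hq1 hq2 ht1 ht2 h1 h2 ho.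
exists q, false, t; split => //.
by apply/(@lab_inr n hn q false t j hq ht).
Qed.

Lemma evh_YX n k (hn : 0 < n) (hk : k <= n - 1) r (i j : 'I_n) : r <= k ->
  (i + r = j \/ i + r = j + n) -> evh n (n - k.+1) hn (inr j) (inl i).
Proof.
move=> hr hij q1 b1 t1 q2 b2 t2 hq1 ht1 hq2 ht2 F1 F2 ho.
have [Eb1 h1] := proj1 (@lab_inr n hn q1 b1 t1 j hq1 ht1) F1.
have [Eb2 h2] := proj1 (@lab_inr n hn q2 b2 t2 j hq2 ht2) F2.
subst b1 b2; simpl in ho.
have [q [t [hq ht hl o1 o2]]] :=
  @core_YX n k r i j q1 t1 q2 t2 hn hk hr (ltn_ord i) (ltn_ord j) hij hq1 hq2 ht1 ht2 h1 h2 ho.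
exists q, true, t; split => //.
by apply/(@lab_inl n hn q true t i hq ht).
Qed.

Lemma XY_iff n k (hn : 0 < n) (hk : k <= n - 1) (i j : 'I_n) :
  alternate (W n (n - k.+1) hn) (inl i) (inr j) <-> coCrownAdj n k (inl i) (inr j).
Proof.
have hD : n - k.+1 < n by lia.
rewrite /=; split.
- move=> Halt.
  have [r [hr1 hr2]] : exists r, (i + r = j \/ i + r = j + n) /\ r < n.
    by have := ltn_ord i; have := ltn_ord j; case: (leqP (i : nat) j) => h; [exists (j - i) | exists (j + n - i)]; lia.
  case: (leqP r k) => Hr.
    apply/existsP; exists (Ordinal (Hr : r < k.+1)); apply/eqP => /=.
    have hm : i + r < n.*2 by have := ltn_ord i; lia.
    by symmetry; exact: (proj2 (modn_iff hm (ltn_ord j)) hr1).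
  exfalso.
  have h12 : pos n (n - k.+1) i true 0 < pos n (n - k.+1) i true n.
    by apply/pos_ltP => //=; right; split.
  have h2 : pos n (n - k.+1) i true n < n * n.*2.+2 by apply: pos_lt.
  have F1 : Fw n (n - k.+1) hn (pos n (n - k.+1) i true 0) = inl i.
    by rewrite Fw_pos //; apply/(@lab_inl n hn i true 0 i) => //; split => //; lia.
  have F2 : Fw n (n - k.+1) hn (pos n (n - k.+1) i true n) = inl i.
    by rewrite Fw_pos //; apply/(@lab_inl n hn i true n i) => //; split => //; lia.
  have [r' [/andP[Hr1 Hr2] Fr]] := betw_of_alt (isT : inl i != inr j) Halt h12 h2 F1 F2.
  have [q [b [t [hq ht E]]]] := pos_dec hD (ltn_trans Hr2 h2).
  subst r'.
  rewrite Fw_pos // in Fr.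
  have [Eb h] := proj1 (@lab_inr n hn q b t j hq ht) Fr.
  subst b.
  move/pos_ltP: Hr1 => /(_ hD (leq0n _) ht) /= Hr1.
  move/pos_ltP: Hr2 => /(_ hD ht (leqnn _)) /= Hr2.
  lia.
- case/existsP => r /eqP Hj.
  have hij : i + r = j \/ i + r = j + n.
    have hm : i + r < n.*2 by have := ltn_ord i; have := ltn_ord r; lia.
    exact: (proj1 (modn_iff hm (ltn_ord j)) (esym Hj)).
  have hr : r <= k by have := ltn_ord r; lia.
  apply: alt_ev => //.
    exact: (evh_XY hk hr hij).
  exact: (evh_YX hk hr hij).
Qed.

Theorem mainTheorem5 (n k : nat) (hn : 1 <= n) (hk : k <= n - 1) :
  word_representable (coCrownAdj n k).
Proof.
have hD : n - k.+1 < n by lia.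
exists (W n (n - k.+1) hn); split.
  case=> a; apply/mapP.
    exists (pos n (n - k.+1) a true 0); first by rewrite mem_iota /= add0n pos_lt.
    by rewrite Fw_pos //; symmetry; apply/(@lab_inl n hn a true 0 a) => //; split => //; lia.
  exists (pos n (n - k.+1) a false 0); first by rewrite mem_iota /= add0n pos_lt.
  by rewrite Fw_pos //; symmetry; apply/(@lab_inr n hn a false 0 a) => //; split => //; lia.
case=> [a|a] [b|b] hne.
- have hab : a != b by [].
  split => // _; apply: alt_ev => //.
    exact: evh_X.
  by apply: evh_X; rewrite eq_sym.
- exact: XY_iff.
- by rewrite alt_sym; exact: XY_iff.
- have hab : a != b by [].
  split => // _; apply: alt_ev => //.
    exact: evh_Y.
  by apply: evh_Y; rewrite eq_sym.
Qed.
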